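(* Let $\beta\subset\mathcal B$. If $\beta$ is not extremal successor closed, then the $\beta$-state is contradictory, i.e. $\mathrm{Ev}(f_\beta)=\emptyset$.
   Context: Let $Q$ be a quiver with finite vertex and arrow sets $Q_0,Q_1$, $M$ a finite-dimensional complex representation, and $\mathcal B=\bigcup_p\mathcal B_p$ an ordered basis ($\mathcal B_p$ a basis of $M_p$, with a total order on $\mathcal B$). For $v:p\to q$, $i\in\mathcal B_p$ write $M_v(i)=\sum_{j\in\mathcal B_q}\mu_{v,i,j}j$. The coefficient quiver $\Gamma$ has vertices $\mathcal B$ and arrows $(v,i,j)$ ($i\in\mathcal B_p$, $j\in\mathcal B_q$, $\mu_{v,i,j}\ne0$); $F:\Gamma\to Q$ is the natural map. An arrow $(v,s,t)$ of $\Gamma$ is extremal if for all arrows $(v,s',t')\in\Gamma_1$ different from $(v,s,t)$ either $s<s'$ or $t'<t$. A subset $\beta\subset\mathcal B$ is extremal successor closed if for every extremal arrow $(v,s,t)$, $s\in\beta$ implies $t\in\beta$. For $v:p\to q$, $s\in F^{-1}(p)$, $t\in F^{-1}(q)$ let $E(v,t,s)=\sum_{(v,s',t')\in\Gamma_1}\mu_{v,s',t'}w_{t,t'}w_{s',s}-\sum_{(v,s',t)\in\Gamma_1}\mu_{v,s',t}w_{s',s}$ in variables $w_{i,j}$. $\mathrm{Rel}^2=\{(i,j):F(i)=F(j),i\le j\}$; $\mathrm{Rel}^3$ is the set of such $(v,t,s)$ for which some $(v,s',t')\in\Gamma_1$ has $s\ge s'$, $t\le t'$; $E(v,t,s)$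 is regarded as a polynomial in $w_{i,j}$, $(i,j)\in\mathrm{Rel}^2$ (other variables set to $0$). The Schubert system $\Sigma$ is the graph on $\mathrm{Rel}^2\sqcup\mathrm{Rel}^3$ with an edge $\{(i,j),(v,t,s)\}$ iff $w_{i,j}$ occurs in $E(v,t,s)$, with links $\lambda=((v,t,s),S)$, $S\subset\mathrm{Rel}^2$, whenever the monomial $\prod_{(i,j)\in S}w_{i,j}$ occurs in $E(v,t,s)$ with nonzero coefficient $\mu_\lambda$. A partial evaluation is a partial function $\mathrm{ev}:\mathrm{Rel}^2\dashrightarrow\mathbb C$ such that for every $(v,t,s)\in\mathrm{Rel}^3$ and neighbour $(k,l)$: if all other neighbours of $(v,t,s)$ are in the domain, then $(k,l)$ is in the domain and $\sum_{\lambda=((v,t,s),S)}\mu_\lambda\prod_{(i,j)\in S}\mathrm{ev}(i,j)=0$. $f_\beta$ is the partial function with $f_\beta(i,j)=1$ if $i=j\in\beta$, $0$ if $i\in\beta$, $i\neq j$, $0$ if $j\notin\beta$, undefined otherwise; $\mathrm{Ev}(f_\beta)$ is the set of partial evaluations extending $f_\beta$. *)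

(* Defs.v *)
From HB Require Import structures.
From mathcomp Require Import all_boot all_algebra.
From mathcomp Require Import complex Rstruct.
From mathcomp Require Import mpoly.

Set Implicit Arguments.
Unset Strict Implicit.
Unset Printing Implicit Defensive.

Import GRing.Theory.
Local Open Scope ring_scope.

Definition CC : fieldType := (Rdefinitions.R)[i]%C.

Section CoefficientQuiver.

Variables (Q0 Q1 : finType) (src tgt : Q1 -> Q0).
(* The ordered basis B = 'I_n (ordered by the natural order on indices);
   F i = the vertex p with i \in B_p. *)
Variables (n : nat) (F : 'I_n -> Q0).
(* The representation M in the basis: M_v(i) = \sum_(j in B_(tgt v)) mu v i j * j
   for i in B_(src v) (entries with F i <> src v or F j <> tgt v are ignored). *)
Variable mu : Q1 -> 'I_n -> 'I_n -> CC.

Definition gamma_arrow (v : Q1) (i j : 'I_n) : bool :=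
  [&& F i == src v, F j == tgt v & mu v i j != 0].

Definition extremal (v : Q1) (s t : 'I_n) : bool :=
  gamma_arrow v s t &&
  [forall s' : 'I_n, forall t' : 'I_n,
     (gamma_arrow v s' t' && ((s', t') != (s, t))) ==> ((s < s')%N || (t' < t)%N)].

Definition ext_succ_closed (beta : {set 'I_n}) : Prop :=
  forall v s t, extremal v s t -> s \in beta -> t \in beta.

Definition rel2 (i j : 'I_n) : bool := (F i == F j) && (i <= j)%N.

Definition rel3 (v : Q1) (t s : 'I_n) : bool :=
  [&& F s == src v, F t == tgt v &
      [exists s' : 'I_n, exists t' : 'I_n,
         [&& gamma_arrow v s' t', (s' <= s)%N & (t <= t')%N]]].

Definition NV := #|{: 'I_n * 'I_n}|.
Definition var (i j : 'I_n) : 'I_NV := enum_rank (i, j).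

(* w_{i,j}, with the variables outside Rel^2 set to 0 *)
Definition w (i j : 'I_n) : {mpoly CC[NV]} :=
  if rel2 i j then 'X_(var i j) else 0.

Definition Epoly (v : Q1) (t s : 'I_n) : {mpoly CC[NV]} :=
  \sum_(s' : 'I_n) \sum_(t' : 'I_n | gamma_arrow v s' t')
      mu v s' t' *: (w t t' * w s' s)
  - \sum_(s' : 'I_n | gamma_arrow v s' t) mu v s' t *: w s' s.

Definition neighbour (v : Q1) (t s : 'I_n) (i j : 'I_n) : bool :=
  rel2 i j && has (fun m : 'X_{1..NV} => (0 < m (var i j))%N) (msupp (Epoly v t s)).

(* partial functions Rel^2 -->  C, as option-valued functions vanishing off Rel^2 *)
Definition pfun := 'I_n -> 'I_n -> option CC.

Definition in_dom (ev : pfun) (i j : 'I_n) : bool := ev i j.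

(* value of sum_{lambda = ((v,t,s),S)} mu_lambda prod_{(i,j) in S} ev(i,j):
   evaluation of E(v,t,s) at ev (only used when all variables of E(v,t,s)
   lie in the domain of ev) *)
Definition eval_E (ev : pfun) (v : Q1) (t s : 'I_n) : CC :=
  (Epoly v t s).@[fun x : 'I_NV =>
     let ij := enum_val x in odflt 0 (ev ij.1 ij.2)].

Definition partial_evaluation (ev : pfun) : Prop :=
  (forall i j, ~~ rel2 i j -> ev i j = None) /\
  (forall v t s, rel3 v t s -> forall k l, neighbour v t s k l ->
     (forall i j, neighbour v t s i j -> (i, j) != (k, l) -> in_dom ev i j) ->
     in_dom ev k l /\ eval_E ev v t s = 0).

Definition f_beta (beta : {set 'I_n}) : pfun := fun i j =>
  if ~~ rel2 i j then None
  else if (i == j) && (i \in beta) then Some 1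
  else if (i \in beta) && (i != j) then Some 0
  else if j \notin beta then Some 0
  else None.

Definition extends (ev f : pfun) : Prop :=
  forall i j c, f i j = Some c -> ev i j = Some c.

Definition Ev (f : pfun) : pfun -> Prop :=
  fun ev => partial_evaluation ev /\ extends ev f.

End CoefficientQuiver.

(* Main.v *)
Require Import Defs.
From HB Require Import structures.
From mathcomp Require Import all_boot all_algebra.
From mathcomp Require Import complex Rstruct.
From mathcomp Require Import mpoly.

Set Implicit Arguments.
Unset Strict Implicit.
Unset Printing Implicit Defensive.
Import GRing.Theory.
Local Open Scope ring_scope.

Theorem lemma2p8 (Q0 Q1 : finType) (src tgt : Q1 -> Q0) (n : nat)
    (F : 'I_n -> Q0) (mu : Q1 -> 'I_n -> 'I_n -> CC) (beta : {set 'I_n}) :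
  ~ ext_succ_closed src tgt F mu beta ->
  forall ev : pfun n, ~ Ev src tgt F mu (f_beta F beta) ev.
Proof.
move=> Hnc ev [[_ Hpe] Hext].
have [v [s [t [Hex Hs Ht]]]] : exists v s t, [/\ extremal src tgt F mu v s t,
    s \in beta & t \notin beta].
  apply: Classical_Prop.NNPP => H; apply: Hnc => v s t He Hs.
  apply: Classical_Prop.NNPP => Ht; apply: H; exists v, s, t; split => //.
  by apply/negP.
move: Hex; rewrite /extremal => /andP [Hg /forallP Hall].
have Hall' : forall s' t', gamma_arrow src tgt F mu v s' t' -> (s', t') != (s, t) ->
    (s < s')%N || (t' < t)%N.
  by move=> s' t' H1 H2; move: (Hall s') => /forallP /(_ t'); rewrite H1 H2 /=.
have Hg' := Hg; move: Hg' => /and3P [Fs Ft Hmu].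
set a := var s s. set b := var t t.
have wss : w F s s = 'X_a by rewrite /w /rel2 eqxx leqnn.
have wtt : w F t t = 'X_b by rewrite /w /rel2 eqxx leqnn.
have HE : Epoly src tgt F mu v t s = mu v s t *: ('X_b * 'X_a) - mu v s t *: 'X_a.
  rewrite /Epoly (bigD1 s) //= (bigD1 t) //= big1; last first.
    move=> t' /andP [Hgt Hne].
    have := Hall' s t' Hgt; rewrite xpair_eqE eqxx /= Hne ltnn /= => /(_ isT) Hlt.
    by rewrite /w /rel2 leqNgt Hlt andbF mul0r scaler0.
  rewrite addr0 big1; last first.
    move=> s' Hne; apply: big1 => t' Hgt.
    have := Hall' s' t' Hgt; rewrite xpair_eqE (negbTE Hne) /= => /(_ isT) /orP [Hlt|Hlt].
      by rewrite [w F s' s]/w /rel2 leqNgt Hlt andbF mulr0 scaler0.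
    by rewrite [w F t t']/w /rel2 leqNgt Hlt andbF mul0r scaler0.
  rewrite addr0 (bigD1 s) //= big1; last first.
    move=> s' /andP [Hgt Hne].
    have := Hall' s' t Hgt; rewrite xpair_eqE (negbTE Hne) /= ltnn orbF => /(_ isT) Hlt.
    by rewrite /w /rel2 leqNgt Hlt andbF scaler0.
  by rewrite addr0 wss wtt.
have evs : ev s s = Some 1.
  by apply: Hext; rewrite /f_beta /rel2 eqxx leqnn /= eqxx Hs.
have evt : ev t t = Some 0.
  apply: Hext; rewrite /f_beta /rel2 eqxx leqnn /=.
  by rewrite eqxx (negbTE Ht).
have Hr3 : rel3 src tgt F mu v t s.
  rewrite /rel3 Fs Ft /=; apply/existsP; exists s; apply/existsP; exists t.
  by rewrite Hg !leqnn.
have cE : forall m, (Epoly src tgt F mu v t s)@_m =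
    mu v s t * ((U_(b) + U_(a) == m)%MM%:R - (U_(a) == m)%MM%:R).
  move=> m; rewrite HE mcoeffB !mcoeffZ -mpolyXD !mcoeffX.
  by rewrite mulrBr.
have Ua : (U_(b) + U_(a) == U_(a))%MM = false.
  apply/negP => /eqP /(congr1 (fun m : 'X_{1..NV n} => m b)).
  by rewrite mnmDE !mnm1E eqxx; case: (a == b).
have nbs : neighbour src tgt F mu v t s s s.
  rewrite /neighbour /rel2 eqxx leqnn /=; apply/hasP; exists U_(a)%MM.
    by rewrite mcoeff_msupp cE Ua eqxx sub0r mulrN1 oppr_eq0.
  by rewrite mnm1E eqxx.
have Hn : forall i j, neighbour src tgt F mu v t s i j -> (i, j) != (s, s) -> in_dom ev i j.
  move=> i j /andP [_ /hasP [m Hm Hpos]] Hne.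
  move: Hm Hpos; rewrite mcoeff_msupp cE.
  have [<-|] := eqVneq (U_(b) + U_(a))%MM m.
    move=> _ Hpos; rewrite mnmDE !mnm1E in Hpos.
    have : (b == var i j) || (a == var i j).
      by move: Hpos; case: (b == _); case: (a == _).
    case/orP => /eqP /enum_rank_inj [Ei Ej]; subst i j.
      by rewrite /in_dom evt.
    by rewrite eqxx in Hne.
  have [<-|] := eqVneq U_(a)%MM m.
    move=> _ _ Hpos; rewrite mnm1E in Hpos.
    move: Hpos; case: eqP => // /enum_rank_inj [Ei Ej]; subst i j.
    by rewrite eqxx in Hne.
  by move=> _ _; rewrite subrr mulr0 eqxx.
have [_ H0] := Hpe v t s Hr3 s s nbs Hn.
move: H0; rewrite /eval_E HE mevalB !mevalZ mevalM !mevalXU.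
rewrite /a /b /var !enum_rankK /= evs evt /= mul0r mulr0 mulr1 sub0r => /eqP.
by rewrite oppr_eq0 (negbTE Hmu).
Qed.
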